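(* Let $n\geq 1$. The restriction map $H^\bullet(\Gamma_{n+1};\mathbb{Q})\to H^\bullet(\Gamma_n;\mathbb{Q})$ induced by the natural inclusion $\Gamma_n\hookrightarrow\Gamma_{n+1}$ sends $\alpha_{\mathcal D}$, for $\mathcal D\in\mathcal D_{n+1}$, to $\alpha_{\mathcal D'}$ if $\mathcal D$ has an isolated vertex and $\mathcal D'\in\mathcal D_n$ is obtained by deleting one isolated vertex, and to $0$ if $\mathcal D$ has no isolated vertex. Consequently, for every $r\ge 0$, the map $H^r(\Gamma_{n+1};\mathbb{Q})\to H^r(\Gamma_n;\mathbb{Q})$ is an isomorphism whenever $n\geq 2r$.
   Context: $\Gamma_n=\mathrm{Br}_n/[P_n,P_n]$ where $P_n\subset\mathrm{Br}_n$ is the pure braid group; $\mathbb{Z}\mathcal A_n=P_n/[P_n,P_n]$; $H^\bullet(\Gamma_n;\mathbb{Q})$ is identified via restriction with $H^\bullet(\mathbb{Z}\mathcal A_n;\mathbb{Q})^{S_n}$, where $H^\bullet(\mathbb{Z}\mathcal A_n;\mathbb{Q})$ is the exterior algebra on $\omega_{ij}$ ($1\le i<j\le n$), with $\sigma(\omega_{ij})=\omega_{\sigma(i)\sigma(j)}$ if $\sigma(i)<\sigma(j)$, $\omega_{\sigma(j)\sigma(i)}$ otherwise. The inclusion $\Gamma_n\hookrightarrow\Gamma_{n+1}$ comes from adding a strand; on these exterior algebras restriction sends $\omega_{ij}$ with $j\le n$ to $\omega_{ij}$ and $\omega_{i,n+1}$ to $0$. For a simple graph $\Delta$ on $\{1,\dots,n\}$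 with lexicographically ordered edges $(i_1,j_1),\dots,(i_k,j_k)$, $\mu_\Delta=\omega_{i_1j_1}\cdots\omega_{i_kj_k}$. A graph is invariant if every automorphism induces an even permutation of its edges; $\mathcal D_n$ is the set of isomorphism classes of invariant graphs with exactly $n$ vertices. Representatives are chosen coherently: for each class $\mathcal G_0$ without isolated vertices a representative on $\{1,\dots,|V\mathcal G_0|\}$ is fixed, and the representative $\Delta_{\mathcal D}$ of a class $\mathcal D$ with $n$ vertices whose non-isolated part is $\mathcal G_0$ is that graph with the vertices $|V\mathcal G_0|+1,\dots,n$ added as isolated vertices. Then $\alpha_{\mathcal D}=\frac{1}{|\mathrm{Stab}_{S_n}(\Delta_{\mathcal D})|}\sum_{\sigma\in S_n}\sigma(\mu_{\Delta_{\mathcal D}})$, and the $\alpha_{\mathcal D}$, $\mathcal D\in\mathcal D_n$, form a basis of $H^\bullet(\Gamma_n;\mathbb{Q})$. *)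

(* Defs.v *)
From HB Require Import structures.
From mathcomp Require Import all_boot all_order all_algebra all_fingroup.
Set Implicit Arguments. Unset Strict Implicit. Unset Printing Implicit Defensive.
Import Order.TTheory GRing.Theory Num.Theory.
Local Open Scope ring_scope.

(* Vertices {1,...,n} are represented by 'I_n (vertex i+1 <-> ordinal i).
   Generators omega_ij (i<j) of H^1(ZA_n;Q) <-> edges (i,j), i<j. *)
Definition edge (n : nat) := {p : 'I_n * 'I_n | (p.1 < p.2)%N}.


Definition edge_le n (e f : edge n) : bool :=
  ((val e).1 < (val f).1)%N ||
  (((val e).1 == (val f).1) && ((val e).2 <= (val f).2)%N).
Definition edge_lt n (e f : edge n) : bool := (e != f) && edge_le e f.

Definition lexsort n (D : {set edge n}) : seq (edge n) := sort (@edge_le n) (enum D).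

Fixpoint inv_count n (s : seq (edge n)) : nat :=
  if s is x :: s' then (count (fun y => edge_lt y x) s' + inv_count s')%N else 0%N.

(* The exterior algebra Lambda[omega_ij] over Q, as a Q-vector space with
   basis the monomials mu_D indexed by edge sets D (simple graphs on [n]):
   an element is its coordinate function. *)
Definition ext n := {ffun {set edge n} -> rat}.
Definition sc n (c : rat) (x : ext n) : ext n := [ffun D => c * x D].

(* mu_D = omega_{i1 j1} ... omega_{ik jk} (edges in lex order) *)
Definition mu n (D : {set edge n}) : ext n := [ffun D' => (D' == D)%:R].

(* product omega_{e1} ... omega_{em} of a word of generators in the
   exterior algebra: 0 if a generator repeats, otherwise the sign of the
   reordering permutation times the monomial of the underlying edge set *)
Definition wordprod n (s : seq (edge n)) : ext n :=
  if uniq s then sc ((-1) ^+ inv_count s) (mu [set x in s]) else 0.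

(* sigma(omega_ij) = omega_{sigma i, sigma j} or omega_{sigma j, sigma i};
   insubd never uses its default since sigma is injective. *)
Definition edge_act n (s : 'S_n) (e : edge n) : edge n :=
  let i := (val e).1 in let j := (val e).2 in
  insubd e (if (s i < s j)%N then (s i, s j) else (s j, s i)).

Definition act n (s : 'S_n) (x : ext n) : ext n :=
  \sum_(D : {set edge n}) sc (x D) (wordprod (map (edge_act s) (lexsort D))).

Definition stab n (D : {set edge n}) : {set 'S_n} :=
  [set s : 'S_n | edge_act s @: D == D].

Definition graph_invariant n (D : {set edge n}) : Prop :=
  forall s : 'S_n, s \in stab D -> ~~ odd (inv_count (map (edge_act s) (lexsort D))).

Definition isolated n (D : {set edge n}) (v : 'I_n) : bool :=
  [forall e in D, ((val e).1 != v) && ((val e).2 != v)].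

(* coherent representative: the isolated vertices are exactly the last ones,
   i.e. D is (a graph without isolated vertices on {1..k}) plus isolated
   vertices k+1..n *)
Definition coherent n (D : {set edge n}) : bool :=
  [forall v : 'I_n, forall w : 'I_n, (v <= w)%N ==> isolated D v ==> isolated D w].

Definition alpha n (D : {set edge n}) : ext n :=
  sc (#|stab D|%:R)^-1 (\sum_(s : 'S_n) act s (mu D)).

Definition widen_edge n (e : edge n) : edge n.+1 :=
  Sub (widen_ord (leqnSn n) (val e).1, widen_ord (leqnSn n) (val e).2) (valP e).

Definition del_last n (D : {set edge n.+1}) : {set edge n} :=
  [set e | widen_edge e \in D].

(* restriction: omega_ij |-> omega_ij (j <= n), omega_{i,n+1} |-> 0 *)
Definition ext_restr n (x : ext n.+1) : ext n :=
  \sum_(D : {set edge n.+1})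
     sc (x D) (if [forall e in D, (val e).2 != ord_max] then mu (del_last D) else 0).

(* H^r(Gamma_n;Q) = degree-r S_n-invariants of the exterior algebra *)
Definition Hr n (r : nat) : pred (ext n) :=
  fun x => [forall D : {set edge n}, (#|D| != r) ==> (x D == 0)] &&
           [forall s : 'S_n, act s x == x].
Arguments Hr : clear implicits.

(* Main.v *)
Require Import Defs.
From mathcomp Require Import all_boot all_order all_algebra all_fingroup.
From mathcomp Require Import zify.
Set Implicit Arguments. Unset Strict Implicit. Unset Printing Implicit Defensive.
Import Order.TTheory GRing.Theory Num.Theory.
Local Open Scope ring_scope.

Section Edges.
Variable n : nat.
Implicit Types (e f : edge n) (s t : 'S_n).

Definition mk (a b : 'I_n) : 'I_n * 'I_n := if (a < b)%N then (a, b) else (b, a).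

Lemma mkC a b : mk a b = mk b a.
Proof.
rewrite /mk; case: (ltngtP a b) => // h.
by have -> : a = b by apply: val_inj.
Qed.

Lemma edge_eq e f : (val e).1 = (val f).1 -> (val e).2 = (val f).2 -> e = f.
Proof.
move: e f => [[a b] hab] [[c d] hcd] /= h1 h2; subst; apply: val_inj => //.
Qed.

Lemma edge_lt12 e : ((val e).1 < (val e).2)%N.
Proof. exact: (valP e). Qed.

Lemma edge_actE s e : val (edge_act s e) = mk (s (val e).1) (s (val e).2).
Proof.
rewrite /edge_act insubdK //.
have hne : s (val e).1 != s (val e).2.
  rewrite (inj_eq perm_inj); apply/eqP => h.
  by move: (edge_lt12 e); rewrite h ltnn.
rewrite /= /mk; case: ltngtP => //= h.
by move: hne; rewrite (_ : s (val e).1 = s (val e).2) ?eqxx //; apply: val_inj.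
Qed.

Lemma edge_act_mul s t e : edge_act (s * t) e = edge_act t (edge_act s e).
Proof.
apply: val_inj; rewrite !edge_actE !permM.
by rewrite [mk (s _) _]/mk; case: ifP => _ //=; apply: mkC.
Qed.

Lemma edge_act1 e : edge_act 1 e = e.
Proof. by apply: val_inj; rewrite edge_actE !perm1 /mk edge_lt12; case: (val e). Qed.

Lemma edge_actK s : cancel (edge_act s) (edge_act (s^-1)%g).
Proof. by move=> e; rewrite -edge_act_mul mulgV edge_act1. Qed.

Lemma edge_actKV s : cancel (edge_act (s^-1)%g) (edge_act s).
Proof. by move=> e; rewrite -edge_act_mul mulVg edge_act1. Qed.

Lemma edge_act_inj s : injective (edge_act s).
Proof. exact: can_inj (edge_actK s). Qed.

Lemma edge_le_total : total (@edge_le n).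
Proof.
move=> e f; rewrite /edge_le.
case: (ltngtP (val e).1 (val f).1) => h; first by [].
  by apply/orP; right; apply/orP; left.
have h' : (val e).1 = (val f).1 by apply: val_inj.
by rewrite h' eqxx /= leq_total.
Qed.

Lemma edge_le_trans : transitive (@edge_le n).
Proof.
move=> f e g; rewrite /edge_le => /orP [h1|/andP [/eqP h1 h2]] /orP [h3|/andP [/eqP h3 h4]].
- by rewrite (ltn_trans h1 h3).
- by rewrite -h3 h1.
- by rewrite h1 h3.
- by rewrite h1 h3 eqxx (leq_trans h2 h4) orbT.
Qed.

Lemma edge_le_anti e f : edge_le e f -> edge_le f e -> e = f.
Proof.
rewrite /edge_le => /orP [h1|/andP [/eqP h1 h2]] /orP [h3|/andP [/eqP h3 h4]].
- by move: (ltn_trans h1 h3); rewrite ltnn.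
- by move: h1; rewrite h3 ltnn.
- by move: h3; rewrite h1 ltnn.
- by apply: edge_eq => //; apply: val_inj; apply/eqP; rewrite eqn_leq h2 h4.
Qed.

Lemma edge_lt_asym e f : e != f -> (edge_lt e f + edge_lt f e = 1)%N.
Proof.
move=> hef; rewrite /edge_lt hef eq_sym hef /=.
case: (boolP (edge_le e f)) => h1; case: (boolP (edge_le f e)) => h2 //=.
- by move: hef; rewrite (edge_le_anti h1 h2) eqxx.
- by move: (edge_le_total e f); rewrite (negbTE h1) (negbTE h2).
Qed.

Definition touch e (a : 'I_n) := ((val e).1 == a) || ((val e).2 == a).

Lemma touch_act s e a : touch (edge_act s e) a = touch e ((s^-1)%g a).
Proof.
rewrite /touch edge_actE /mk.
have E1 : (s (val e).1 == a) = ((val e).1 == (s^-1)%g a).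
  by rewrite -{1}(permKV s a) (inj_eq perm_inj).
have E2 : (s (val e).2 == a) = ((val e).2 == (s^-1)%g a).
  by rewrite -{1}(permKV s a) (inj_eq perm_inj).
by case: ifP => _ /=; rewrite E1 E2 // orbC.
Qed.

Lemma edge_act_fix s e : s (val e).1 = (val e).1 -> s (val e).2 = (val e).2 -> edge_act s e = e.
Proof. by move=> h1 h2; apply: val_inj; rewrite edge_actE h1 h2 /mk edge_lt12; case: (val e). Qed.

Lemma isolatedE (D : {set edge n}) v : isolated D v = [forall e in D, ~~ touch e v].
Proof. by apply: eq_forallb => e; rewrite /touch negb_or. Qed.

End Edges.

Section Sort.
Variable n : nat.
Implicit Types (D E : {set edge n}) (l : seq (edge n)).

Lemma lexsort_sorted D : sorted (@edge_le n) (lexsort D).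
Proof. exact: (sort_sorted (@edge_le_total n)). Qed.

Lemma mem_lexsort D x : (x \in lexsort D) = (x \in D).
Proof. by rewrite mem_sort mem_enum. Qed.

Lemma lexsort_uniq D : uniq (lexsort D).
Proof. by rewrite sort_uniq enum_uniq. Qed.

Lemma inv_sorted l : sorted (@edge_le n) l -> uniq l -> inv_count l = 0%N.
Proof.
elim: l => [|x l IH] //= hs /andP [hx hu].
rewrite IH ?(path_sorted hs) // addn0.
apply/eqP; rewrite -leqn0 leqNgt -has_count; apply/hasPn => y hy.
have := order_path_min (@edge_le_trans n) hs; move/allP/(_ y hy) => hxy.
rewrite /edge_lt; apply/negP => /andP [hne hyx].
by move: hne; rewrite (edge_le_anti hyx hxy) eqxx.
Qed.

Lemma inv_lexsort D : inv_count (lexsort D) = 0%N.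
Proof. exact: inv_sorted (lexsort_sorted D) (lexsort_uniq D). Qed.

Lemma set_map_lexsort (f : edge n -> edge n) D : [set x in map f (lexsort D)] = f @: D.
Proof.
apply/setP => y; rewrite inE; apply/mapP/imsetP => [[x hx ->]|[x hx ->]]; exists x => //.
  by rewrite -mem_lexsort.
by rewrite mem_lexsort.
Qed.

Lemma lexsort_eq l D : sorted (@edge_le n) l -> uniq l -> l =i D -> lexsort D = l.
Proof.
move=> hs hu hl.
have anti : antisymmetric (@edge_le n) by move=> x y /andP [] /edge_le_anti.
apply: (sorted_eq (@edge_le_trans n) anti) => //; first exact: lexsort_sorted.
apply: uniq_perm => //; first exact: lexsort_uniq.
by move=> x; rewrite mem_lexsort hl.
Qed.

End Sort.

Lemma perm_front (T : eqType) (x : T) A B : perm_eq (A ++ x :: B) (x :: A ++ B).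
Proof. by rewrite -cat1s perm_catCA. Qed.

Section Parity.
Variable n : nat.
Variable g : edge n -> edge n.
Hypothesis g_inj : injective g.

Definition Q (l : seq (edge n)) := (inv_count (map g l) + inv_count l)%N.
Definition F (x : edge n) l :=
  (count (fun y => edge_lt (g y) (g x)) l + count (fun y => edge_lt y x) l)%N.

Lemma Qcons x l : Q (x :: l) = (F x l + Q l)%N.
Proof. by rewrite /Q /F /= count_map addnACA. Qed.

Lemma F_perm x l l' : perm_eq l l' -> F x l = F x l'.
Proof. by move/seq.permP => h; rewrite /F !h. Qed.

Lemma F_cons x a l : F x (a :: l) = ((edge_lt (g a) (g x) + edge_lt a x) + F x l)%N.
Proof. by rewrite /F /= addnACA. Qed.

Lemma move_front x A B : x \notin A -> odd (Q (A ++ x :: B)) = odd (Q (x :: A ++ B)).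
Proof.
elim: A => [|a A0 IH] //=; rewrite inE negb_or => /andP [hxa hxA].
rewrite Qcons oddD IH // Qcons Qcons Qcons.
rewrite (F_perm _ (perm_front x A0 B)) /= F_cons F_cons.
have hc : odd (edge_lt (g x) (g a) + edge_lt x a) = odd (edge_lt (g a) (g x) + edge_lt a x).
  have h1 := edge_lt_asym hxa.
  have h2 : g x != g a by rewrite (inj_eq g_inj).
  have h3 := edge_lt_asym h2.
  move: h1 h3; case: (edge_lt x a); case: (edge_lt a x); case: (edge_lt (g x) (g a));
    by case: (edge_lt (g a) (g x)).
rewrite !oddD; move: hc; rewrite !oddD.
move=> ->; move: (odd (count _ _)) => u1.
by case: (odd _ (+) _); case: u1; case: (odd (count _ _)); case: (odd (count _ _)); case: (odd (count _ _)); case: (odd _ (+) _).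
Qed.

Lemma parity_perm M L : uniq L -> perm_eq M L -> odd (Q M) = odd (Q L).
Proof.
elim: M L => [|x M IH] L hu hp.
  by move: hp; rewrite perm_sym => /perm_nilP ->.
have hxL : x \in L by rewrite -(perm_mem hp) mem_head.
case/splitPr: hxL hu hp => A B hu hp.
have hxA : x \notin A.
  by move: hu; rewrite cat_uniq /= => /and3P [_ /norP [hA _] _].
have hu' : uniq (A ++ B).
  by move: hu; rewrite (perm_uniq (perm_front x A B)) /= => /andP [].
have hp' : perm_eq M (A ++ B).
  by move: hp; rewrite perm_sym (permPl (perm_front x A B)) perm_cons perm_sym.
by rewrite move_front // !Qcons !(oddD (F _ _)) (IH _ hu' hp') (F_perm _ hp').
Qed.

End Parity.

Section Sign.
Variable n : nat.
Implicit Types (D E : {set edge n}) (s t : 'S_n).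

Definition sg s D := inv_count (map (edge_act s) (lexsort D)).

Lemma map_act_uniq s D : uniq (map (edge_act s) (lexsort D)).
Proof. by rewrite map_inj_uniq ?lexsort_uniq //; apply: edge_act_inj. Qed.

Lemma sg_mul s t D : odd (sg (s * t) D) = odd (sg s D) (+) odd (sg t (edge_act s @: D)).
Proof.
have hp : perm_eq (map (edge_act s) (lexsort D)) (lexsort (edge_act s @: D)).
  apply: uniq_perm; [exact: map_act_uniq | exact: lexsort_uniq |] => y.
  by rewrite mem_lexsort -set_map_lexsort inE.
have := parity_perm (@edge_act_inj n t) (lexsort_uniq _) hp.
rewrite /Q inv_lexsort addn0 -map_comp.
have -> : map (edge_act t \o edge_act s) (lexsort D) = map (edge_act (s * t)) (lexsort D).
  by apply: eq_map => e /=; rewrite edge_act_mul.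
rewrite /sg => <-.
by rewrite oddD addbC -addbA addbb addbF.
Qed.

Lemma sg_fix s D : {in D, forall e, edge_act s e = e} -> sg s D = 0%N.
Proof.
move=> h; rewrite /sg.
have -> : map (edge_act s) (lexsort D) = lexsort D.
  rewrite -{2}(map_id (lexsort D)); apply/eq_in_map => e.
  by rewrite mem_lexsort => /h.
exact: inv_lexsort.
Qed.
End Sign.

Lemma imset_actKV n (s : 'S_n) (E : {set edge n}) : edge_act s @: (edge_act (s^-1)%g @: E) = E.
Proof.
by rewrite -imset_comp (eq_imset _ (edge_actKV s)) imset_id.
Qed.

Lemma imset_actK n (s : 'S_n) (E : {set edge n}) : edge_act (s^-1)%g @: (edge_act s @: E) = E.
Proof.
by rewrite -imset_comp (eq_imset _ (edge_actK s)) imset_id.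
Qed.

Lemma ext0E n (D : {set edge n}) : (0 : ext n) D = 0.
Proof. by rewrite ffunE. Qed.

Lemma actE n (s : 'S_n) (x : ext n) (D : {set edge n}) : Defs.act s x (edge_act s @: D) = (-1) ^+ sg s D * x D.
Proof.
rewrite /Defs.act sum_ffunE (bigD1 D) //= big1 ?addr0.
  by rewrite ffunE /wordprod map_act_uniq !ffunE set_map_lexsort eqxx mulr1 mulrC.
move=> D' hD'; rewrite ffunE /wordprod map_act_uniq !ffunE set_map_lexsort.
case: eqP; last by rewrite !mulr0.
by move/(imset_inj (@edge_act_inj n s)) => h; move: hD'; rewrite h eqxx.
Qed.

Section Widen.
Variable n : nat.
Implicit Types (D : {set edge n.+1}) (E : {set edge n}) (t : 'S_n).

Definition W E : {set edge n.+1} := @widen_edge n @: E.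
Definition avoid D := [forall e in D, (val e).2 != ord_max].
Definition ext_perm t : 'S_n.+1 := lift_perm ord_max ord_max t.

Lemma widen_edge_val e :
  val (@widen_edge n e) = (widen_ord (leqnSn n) (val e).1, widen_ord (leqnSn n) (val e).2).
Proof. by []. Qed.

Lemma widen_edge_inj : injective (@widen_edge n).
Proof.
move=> e f h; have := congr1 val h; rewrite !widen_edge_val => [[h1 h2]].
by apply: edge_eq; apply: val_inj.
Qed.

Lemma widen_edge2 e : (val (@widen_edge n e)).2 != ord_max.
Proof. by rewrite widen_edge_val -(inj_eq val_inj) /= neq_ltn ltn_ord. Qed.

Lemma widen_surj (e : edge n.+1) : (val e).2 != ord_max -> exists f, e = @widen_edge n f.
Proof.
move=> h.
have h2 : ((val e).2 < n)%N by move: h (ltn_ord (val e).2); rewrite -(inj_eq val_inj) /=; lia.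
have h1 : ((val e).1 < n)%N by move: (edge_lt12 e) h2; lia.
exists (exist (fun p : 'I_n * 'I_n => (p.1 < p.2)%N) (Ordinal h1, Ordinal h2) (edge_lt12 e)).
by apply: edge_eq; apply: val_inj.
Qed.

Lemma avoid_W E : avoid (W E).
Proof. by apply/forall_inP => e /imsetP [f _ ->]; exact: widen_edge2. Qed.

Lemma del_W E : del_last (W E) = E.
Proof. by apply/setP => e; rewrite inE mem_imset //; exact: widen_edge_inj. Qed.

Lemma W_del D : avoid D -> W (del_last D) = D.
Proof.
move/forall_inP => h; apply/setP => e; apply/imsetP/idP => [[f]|he].
  by rewrite inE => hf ->.
have [f hf] := widen_surj (h e he); exists f => //; by rewrite inE -hf.
Qed.

Lemma card_W E : #|W E| = #|E|.
Proof. by rewrite card_imset //; exact: widen_edge_inj. Qed.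

Lemma restrE (x : ext n.+1) E : ext_restr x E = x (W E).
Proof.
rewrite /ext_restr sum_ffunE (bigD1 (W E)) //= big1 ?addr0.
  by have := avoid_W E; rewrite /avoid ffunE => ->; rewrite !ffunE del_W eqxx mulr1.
move=> D hD; rewrite ffunE; case: ifP => ha; last by rewrite ext0E mulr0.
rewrite ffunE; case: eqP; last by rewrite mulr0.
by move=> hE; move: hD; rewrite hE (W_del ha) eqxx.
Qed.

End Widen.

Section Widen2.
Variable n : nat.
Implicit Types (D : {set edge n.+1}) (E : {set edge n}) (t : 'S_n).

Lemma widen_lift (k : 'I_n) : widen_ord (leqnSn n) k = lift ord_max k.
Proof. by apply: ord_inj; rewrite lift_max. Qed.

Lemma ext_perm_widen t k : ext_perm t (widen_ord (leqnSn n) k) = widen_ord (leqnSn n) (t k).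
Proof. by rewrite !widen_lift /ext_perm lift_perm_lift. Qed.

Lemma ext_perm_max t : ext_perm t ord_max = ord_max.
Proof. exact: lift_perm_id. Qed.

Lemma edge_act_ext t e : edge_act (ext_perm t) (@widen_edge n e) = @widen_edge n (edge_act t e).
Proof.
apply: val_inj; rewrite edge_actE !widen_edge_val /= !ext_perm_widen edge_actE /mk /=.
by case: ifP.
Qed.

Lemma imset_ext t E : edge_act (ext_perm t) @: W E = W (edge_act t @: E).
Proof. by rewrite /W -!imset_comp; apply: eq_imset => e /=; rewrite edge_act_ext. Qed.

Lemma edge_le_W e f : edge_le (@widen_edge n e) (@widen_edge n f) = edge_le e f.
Proof. by rewrite /edge_le !widen_edge_val /= -(inj_eq val_inj) /= (inj_eq val_inj). Qed.

Lemma edge_lt_W e f : edge_lt (@widen_edge n e) (@widen_edge n f) = edge_lt e f.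
Proof. by rewrite /edge_lt edge_le_W (inj_eq (@widen_edge_inj n)). Qed.

Lemma lexsort_W E : lexsort (W E) = map (@widen_edge n) (lexsort E).
Proof.
apply: lexsort_eq.
- rewrite sorted_map (@eq_sorted _ _ (@edge_le n)); first exact: lexsort_sorted.
  by move=> a b /=; exact: edge_le_W.
- by rewrite map_inj_uniq ?lexsort_uniq //; exact: widen_edge_inj.
- move=> x; apply/mapP/imsetP => [[y hy ->]|[y hy ->]]; exists y => //.
    by rewrite -mem_lexsort.
  by rewrite mem_lexsort.
Qed.

Lemma inv_W l : inv_count (map (@widen_edge n) l) = inv_count l.
Proof.
elim: l => [|x l IH] //=; rewrite IH count_map; congr (_ + _)%N.
Qed.

Lemma sg_ext t E : sg (ext_perm t) (W E) = sg t E.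
Proof.
rewrite /sg lexsort_W -map_comp (@eq_map _ _ _ (@widen_edge n \o edge_act t)).
  by rewrite map_comp inv_W.
by move=> e /=; rewrite edge_act_ext.
Qed.

Lemma ext_perm_surj (s : 'S_n.+1) : s ord_max = ord_max -> exists t, s = ext_perm t.
Proof.
move=> hs.
pose f (k : 'I_n) := odflt k (unlift ord_max (s (lift ord_max k))).
have hf k : s (lift ord_max k) = lift ord_max (f k).
  have hne : ord_max != s (lift ord_max k).
    by rewrite -{1}hs (inj_eq (@perm_inj _ s)) neq_lift.
  by case: (unlift_some hne) => j hj; rewrite /f => ->.
have f_inj : injective f.
  by move=> a b h; apply: (@lift_inj _ ord_max); apply: (@perm_inj _ s); rewrite !hf h.
exists (perm f_inj); apply/permP => i; case: (eqVneq ord_max i) => [<-|hi].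
  by rewrite ext_perm_max hs.
by case: (unlift_some hi) => j -> _; rewrite /ext_perm lift_perm_lift permE hf.
Qed.

End Widen2.

Section Orbit.
Variable m : nat.
Implicit Types (D F : {set edge m}) (s t g : 'S_m).

Lemma imset_mul s t D : edge_act (s * t) @: D = edge_act t @: (edge_act s @: D).
Proof. by rewrite -imset_comp; apply: eq_imset => e; rewrite edge_act_mul. Qed.

Lemma imset_fix (f : edge m -> edge m) D : {in D, forall e, f e = e} -> f @: D = D.
Proof.
move=> h; apply/setP => e; apply/imsetP/idP => [[x hx ->]|he]; first by rewrite h.
by exists e; rewrite ?h.
Qed.

Lemma sign_sg_mul s t D :
  (-1) ^+ sg (s * t) D = (-1) ^+ sg s D * (-1) ^+ sg t (edge_act s @: D) :> rat.
Proof. by rewrite -signr_odd sg_mul signr_addb !signr_odd. Qed.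

Lemma act_mu s D F :
  Defs.act s (mu D) F = if edge_act s @: D == F then (-1) ^+ sg s D else 0.
Proof.
case: eqP => [<-|hne]; first by rewrite actE ffunE eqxx mulr1.
rewrite -(imset_actKV s F) actE ffunE; case: eqP; last by rewrite mulr0.
by move=> h; case: hne; rewrite -h imset_actKV.
Qed.

Lemma sum_act_mu0 D F : (forall s, edge_act s @: D != F) ->
  (\sum_(s : 'S_m) Defs.act s (mu D)) F = 0.
Proof.
by move=> h; rewrite sum_ffunE big1 // => s _; rewrite act_mu (negbTE (h s)).
Qed.

Lemma sg_stab D g : graph_invariant D -> g \in stab D -> ~~ odd (sg g D).
Proof. by move=> hD /hD. Qed.

Lemma sum_act_mu D F s0 : graph_invariant D -> edge_act s0 @: D = F ->
  (\sum_(s : 'S_m) Defs.act s (mu D)) F = #|stab D|%:R * (-1) ^+ sg s0 D.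
Proof.
move=> hD hs0; rewrite sum_ffunE.
rewrite (reindex_inj (mulIg s0)) /=.
rewrite (eq_bigr (fun g => if g \in stab D then (-1) ^+ sg s0 D else 0)).
  by rewrite -big_mkcond sumr_const mulr_natl.
move=> g _; rewrite act_mu imset_mul inE.
case: (eqVneq (edge_act g @: D) D) => hg.
  rewrite hg hs0 eqxx sign_sg_mul hg -signr_odd.
  have := sg_stab hD (g := g); rewrite inE hg eqxx => /(_ isT) /negbTE ->.
  by rewrite mul1r.
case: eqP => // h; case/eqP: hg.
by apply: (imset_inj (@edge_act_inj m s0)); rewrite h hs0.
Qed.

End Orbit.

Section Iso.
Variable n : nat.
Implicit Types (D : {set edge n.+1}) (s : 'S_n.+1).

Lemma touch1_max (e : edge n.+1) : ((val e).1 == ord_max) = false.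
Proof.
apply/negbTE; rewrite -(inj_eq val_inj) /= neq_ltn.
by move: (edge_lt12 e) (ltn_ord (val e).2) => h1 h2; rewrite (leq_trans h1) // -ltnS.
Qed.

Lemma avoid_iso D : avoid D = isolated D ord_max.
Proof. by rewrite isolatedE; apply: eq_forallb => e; rewrite /touch touch1_max. Qed.

Lemma iso_img s D v : isolated (edge_act s @: D) v = isolated D ((s^-1)%g v).
Proof.
rewrite !isolatedE; apply/forall_inP/forall_inP => h e he.
  by rewrite -touch_act; apply: h; apply: imset_f.
by case/imsetP: he => f hf ->; rewrite touch_act; apply: h.
Qed.

Lemma exists_iso D : (2 * #|D| <= n)%N -> exists v, isolated D v.
Proof.
move=> hD.
pose V := [set (val e).1 | e in D] :|: [set (val e).2 | e in D].
have hV : (#|V| <= 2 * #|D|)%N.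
  rewrite mul2n -addnn; apply: (leq_trans (leq_card_setU _ _)).
  by apply: leq_add; apply: leq_imset_card.
have : (0 < #|~: V|)%N by have := cardsC V; rewrite card_ord; move: hV hD; lia.
case/card_gt0P => v; rewrite inE => hv; exists v.
rewrite isolatedE; apply/forall_inP => e he; rewrite /touch negb_or.
apply/andP; split; apply/negP => /eqP h; apply: (negP hv); rewrite inE -h.
  by apply/orP; left; apply/imsetP; exists e.
by apply/orP; right; apply/imsetP; exists e.
Qed.

Lemma trick D1 s : avoid D1 -> avoid (edge_act s @: D1) ->
  exists t, edge_act (ext_perm t) @: D1 = edge_act s @: D1 /\
            odd (sg (ext_perm t) D1) = odd (sg s D1).
Proof.
move=> h1 h2.
pose u := (s^-1)%g ord_max.
pose p := tperm u ord_max.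
have hu : isolated D1 u by rewrite -iso_img -avoid_iso.
have hm : isolated D1 ord_max by rewrite -avoid_iso.
have hp : {in D1, forall e, edge_act p e = e}.
  move=> e he; move: hu hm; rewrite !isolatedE => /forall_inP /(_ e he) hu' /forall_inP /(_ e he).
  rewrite /touch !negb_or => /andP [m1 m2]; move: hu'; rewrite negb_or => /andP [u1 u2].
  by apply: edge_act_fix; rewrite tpermD // eq_sym.
have hs' : (p * s)%g ord_max = ord_max by rewrite permM tpermR /u permKV.
have [t ht] := ext_perm_surj hs'.
exists t; rewrite -ht; split.
  by rewrite imset_mul (imset_fix hp).
by rewrite sg_mul (sg_fix hp) (imset_fix hp).
Qed.

End Iso.

Section HrS.
Variable m : nat.
Variable r : nat.
Implicit Types (x : ext m) (D : {set edge m}) (s : 'S_m).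

Lemma HrE_deg x D : x \in Hr m r -> #|D| != r -> x D = 0.
Proof.
rewrite unfold_in /Hr => /andP [/forallP h _] hD.
by move: (h D); rewrite hD => /eqP.
Qed.

Lemma HrE_inv x : x \in Hr m r -> forall s D, x (edge_act s @: D) = (-1) ^+ sg s D * x D.
Proof.
rewrite unfold_in /Hr => /andP [_ /forallP hs] s D; move: (hs s) => /eqP h.
by rewrite -{1}h actE.
Qed.

Lemma HrI x : (forall D, #|D| != r -> x D = 0) ->
  (forall s D, x (edge_act s @: D) = (-1) ^+ sg s D * x D) -> x \in Hr m r.
Proof.
move=> h1 h2; rewrite unfold_in /Hr; apply/andP; split.
  by apply/forallP => D; apply/implyP => hD; rewrite h1 // eqxx.
apply/forallP => s; apply/eqP/ffunP => E.
by rewrite -(imset_actKV s E) actE (h2 s).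
Qed.

Lemma card_act s D : #|edge_act s @: D| = #|D|.
Proof. by rewrite card_imset //; apply: edge_act_inj. Qed.

End HrS.

Section Part2.
Variable n r : nat.
Hypothesis hr : (2 * r <= n)%N.

Lemma restr_Hr (x : ext n.+1) : x \in Hr n.+1 r -> ext_restr x \in Hr n r.
Proof.
move=> hx; apply: HrI => [E hE|t E]; rewrite !restrE.
  by apply: (HrE_deg hx); rewrite card_W.
by rewrite -imset_ext (HrE_inv hx) sg_ext.
Qed.

Lemma avoid_tperm (D : {set edge n.+1}) v : isolated D v ->
  avoid (edge_act (tperm v ord_max) @: D).
Proof. by move=> h; rewrite avoid_iso iso_img tpermV tpermR. Qed.

Lemma restr_inj : {in Hr n.+1 r &, injective (@ext_restr n)}.
Proof.
move=> x y hx hy hxy; apply/ffunP => D.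
case: (eqVneq #|D| r) => hD; last by rewrite (HrE_deg hx hD) (HrE_deg hy hD).
have [v hv] : exists v, isolated D v by apply: exists_iso; rewrite hD.
set s := tperm v ord_max.
have ha := avoid_tperm hv.
have := congr1 (fun z : ext n => z (del_last (edge_act s @: D))) hxy.
rewrite /= !restrE W_del // (HrE_inv hx) (HrE_inv hy) => h.
by rewrite -(signrMK (sg s D) (x D)) h signrMK.
Qed.

Lemma WD (y : ext n) (D1 : {set edge n.+1}) (s : 'S_n.+1) : y \in Hr n r ->
  avoid D1 -> avoid (edge_act s @: D1) ->
  (-1) ^+ sg s D1 * y (del_last (edge_act s @: D1)) = y (del_last D1).
Proof.
move=> hy h1 h2.
have [t [ht hodd]] := trick h1 h2.
rewrite -ht -signr_odd -hodd signr_odd -(W_del h1) imset_ext sg_ext !del_W.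
by rewrite (HrE_inv hy) signrMK.
Qed.

Definition lift_y (y : ext n) : ext n.+1 :=
  [ffun D : {set edge n.+1} => if #|D| == r then
     (if [pick s | avoid (edge_act s @: D)] is Some s
      then (-1) ^+ sg s D * y (del_last (edge_act s @: D)) else 0) else 0].

Lemma lift_y_any (y : ext n) (D : {set edge n.+1}) (s1 : 'S_n.+1) : y \in Hr n r -> #|D| = r -> avoid (edge_act s1 @: D) ->
  lift_y y D = (-1) ^+ sg s1 D * y (del_last (edge_act s1 @: D)).
Proof.
move=> hy hD h1; rewrite ffunE hD eqxx.
case: pickP => [s0 h0|hn]; last by move: (hn s1); rewrite h1.
set D1 := edge_act s0 @: D.
set q := (s0^-1 * s1)%g.
have hq : edge_act s1 @: D = edge_act q @: D1 by rewrite /D1 -imset_mul mulKVg.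
have hsg : (-1) ^+ sg s1 D = (-1) ^+ sg s0 D * (-1) ^+ sg q D1 :> rat.
  by rewrite -sign_sg_mul mulKVg.
rewrite hsg -mulrA; congr (_ * _); rewrite hq WD //.
by rewrite -hq.
Qed.

Lemma lift_y_Hr (y : ext n) : y \in Hr n r -> lift_y y \in Hr n.+1 r.
Proof.
move=> hy; apply: HrI => [D hD|s D]; first by rewrite ffunE (negbTE hD).
case: (eqVneq #|D| r) => hD; last first.
  by rewrite !ffunE card_act (negbTE hD) mulr0.
have [v hv] : exists v, isolated D v by apply: exists_iso; rewrite hD.
set s1 := tperm v ord_max.
have ha := avoid_tperm hv.
rewrite (lift_y_any hy hD ha).
have hq : edge_act ((s^-1)%g * s1) @: (edge_act s @: D) = edge_act s1 @: D.
  by rewrite -imset_mul mulKVg.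
rewrite (lift_y_any (s1 := ((s^-1)%g * s1)%g) hy) ?card_act ?hq //.
have hsg : (-1) ^+ sg s1 D = (-1) ^+ sg s D * (-1) ^+ sg ((s^-1)%g * s1) (edge_act s @: D) :> rat.
  by rewrite -sign_sg_mul mulKVg.
by rewrite hsg mulrA signrMK.
Qed.

Lemma restr_lift_y (y : ext n) : y \in Hr n r -> ext_restr (lift_y y) = y.
Proof.
move=> hy; apply/ffunP => E; rewrite restrE.
case: (eqVneq #|E| r) => hE; last by rewrite ffunE card_W (negbTE hE) (HrE_deg hy hE).
have h1 : edge_act 1 @: W E = W E by rewrite (imset_fix (f := edge_act 1)) // => e _; rewrite edge_act1.
rewrite (lift_y_any (s1 := 1%g) hy) ?card_W ?h1 ?avoid_W // del_W.
by rewrite (sg_fix (s := 1%g)) ?expr0 ?mul1r // => e _; rewrite edge_act1.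
Qed.

End Part2.

Lemma stab_card_neq0 m (D : {set edge m}) : (#|stab D|%:R : rat) != 0.
Proof.
rewrite pnatr_eq0 -lt0n; apply/card_gt0P; exists 1%g; rewrite inE.
by rewrite (imset_fix (f := edge_act 1)) // => e _; rewrite edge_act1.
Qed.

Lemma alphaE m (D : {set edge m}) F :
  alpha D F = (#|stab D|%:R)^-1 * (\sum_(s : 'S_m) Defs.act s (mu D)) F.
Proof. by rewrite /alpha ffunE. Qed.

Section Part1.
Variable n : nat.
Variable D : {set edge n.+1}.
Hypothesis hD : graph_invariant D.

Lemma part1_iso : avoid D -> ext_restr (alpha D) = alpha (del_last D).
Proof.
move=> ha; set E0 := del_last D.
have hDW : D = W E0 by rewrite W_del.
have hE0 : graph_invariant E0.
  move=> t; rewrite inE => /eqP ht.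
  have : ext_perm t \in stab D by rewrite inE hDW imset_ext ht.
  by move/hD; rewrite -[inv_count _]/(sg _ _) hDW sg_ext.
apply/ffunP => E; rewrite restrE !alphaE.
case: (pickP (fun t : 'S_n => edge_act t @: E0 == E)) => [t /eqP ht|hn].
  rewrite (sum_act_mu (s0 := t)) // (sum_act_mu (s0 := ext_perm t)) //; last first.
    by rewrite hDW imset_ext ht.
  by rewrite !mulrA !mulVf ?stab_card_neq0 // !mul1r hDW sg_ext.
rewrite (sum_act_mu0 (D := E0)); last by move=> t; move: (hn t) => /= ->.
rewrite sum_act_mu0 ?mulr0 // => s; apply/eqP => hs.
have h2 : avoid (edge_act s @: D) by rewrite hs avoid_W.
have [t [ht _]] := trick ha h2.
move: (hn t); rewrite hs hDW imset_ext in ht.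
by rewrite (imset_inj (@widen_edge_inj n) ht) eqxx.
Qed.

Lemma part1_noiso : ~ (exists v, isolated D v) -> ext_restr (alpha D) = 0.
Proof.
move=> hn; apply/ffunP => E; rewrite restrE alphaE ext0E sum_act_mu0 ?mulr0 //.
move=> s; apply/eqP => hs; apply: hn; exists ((s^-1)%g ord_max).
by rewrite -iso_img -avoid_iso hs avoid_W.
Qed.

End Part1.

Unset Implicit Arguments.
Set Strict Implicit.

Theorem proposition2p9 (n : nat) (hn : (1 <= n)%N) :
  (forall D : {set edge n.+1}, graph_invariant D -> coherent D ->
     ((exists v, isolated D v) -> ext_restr (alpha D) = alpha (del_last D)) /\
     (~ (exists v, isolated D v) -> ext_restr (alpha D) = 0)) /\
  (forall r : nat, (2 * r <= n)%N ->
     [/\ (forall x, x \in Hr n.+1 r -> ext_restr x \in Hr n r),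
         {in Hr n.+1 r &, injective (@ext_restr n)} &
         (forall y, y \in Hr n r -> exists2 x, x \in Hr n.+1 r & ext_restr x = y)]).
Proof.
split.
  move=> D hD hc; split; last exact: part1_noiso.
  case=> v hv; apply: part1_iso => //.
  rewrite avoid_iso; move/forallP: hc => /(_ v) /forallP /(_ ord_max).
  by rewrite -ltnS ltn_ord /= hv.
move=> r hr; split.
- exact: restr_Hr.
- exact: restr_inj.
- by move=> y hy; exists (lift_y r y); [exact: lift_y_Hr | exact: restr_lift_y].
Qed.
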